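(* Let $T_n=T(x_1\dots x_n,k)$ with $x_1,\dots,x_n$ i.i.d. uniform on $\{B,b,R,r\}$ and $k$ uniform on $\{1,\dots,n\}$. Then for all $t>0$, $$\mathbb P\big[|\partial T_n|\ge t\sqrt n\big]\le 2\exp\!\left(-\frac{t^2}{32}\right),$$ where $|\partial T_n|$ is the number of boundary vertices of $T_n$.
   Context: Necklace construction (Sheffield). Given a finite word $X=x_1\dots x_n$ in $\{B,b,R,r\}$, build inductively disc triangulations $D_0\subset\dots\subset D_n$ in the closed upper half-plane with blue/red vertices and an active edge with blue endpoint $b_j$ and red endpoint $r_j$; initially non-positive integers are blue, positive integers red, $b_0=0,r_0=1$. Step according to $x_{j+1}$: (B) new blue vertex $b_{j+1}$, triangle $(b_j,r_j,b_{j+1})$, $r_{j+1}=r_j$; (R) new red vertex $r_{j+1}$, triangle $(b_j,r_j,r_{j+1})$, $b_{j+1}=b_j$; (b) $b_{j+1}$ = counterclockwise boundary neighbour of $b_j$ (or $m-1$, adding edge $[m-1,m]$, if $b_j=m\in\mathbb Z$), triangle $(b_{j+1},b_j,r_j)$, $r_{j+1}=r_j$; (r) $r_{j+1}$ = clockwise boundary neighbour of $r_j$ (or $m+1$, adding $[m,m+1]$, if $r_j=m\in\mathbb Z$), triangle $(b_j,r_j,r_{j+1})$, $b_{j+1}=b_j$. $T_+(X)$ is the disc triangulation $D_n$ (consisting of the $n$ triangles) rooted at the first triangle; $T(X,k)$ is $T_+(X)$ rerooted at the triangle created at step $k$. $\partial T_n$ is the set of vertices on the topological boundary of the support (union of the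 $n$ triangles) of $T_n$. *)

(* Defs.v *)
From Stdlib Require Import Reals ZArith List Bool.
Import ListNotations.

Inductive letter := LB | Lb | LR | Lr.

(* Vertices: the integers (initial vertices on the real line; z <= 0 blue,
   z > 0 red) and the vertex created at step j (VNew j). *)
Inductive vertex := VInt (z : Z) | VNew (j : nat).

Definition vertex_eq_dec (u v : vertex) : {u = v} + {u <> v}.
Proof. decide equality; [apply Z.eq_dec | apply Nat.eq_dec]. Defined.

Definition veqb (u v : vertex) : bool := if vertex_eq_dec u v then true else false.

(* State of the construction after j steps: the disc triangulation D_j.
   Its support lies in the closed upper half-plane; its boundary cycle
   consists of the real segment [lo, hi] (all integers lo..hi, joined by the
   edges [m,m+1]) together with the upper boundary path [top], listed from
   left (lo) to right (hi), i.e. clockwise.  [bact], [ract] are the blue and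
   red endpoints of the active edge (consecutive on [top]), and [tris] is
   the list of triangles, in order of creation. *)
Record state := mkState {
  lo : Z; hi : Z; top : list vertex;
  bact : vertex; ract : vertex;
  tris : list (vertex * vertex * vertex) }.

Definition init_state : state :=
  mkState 0%Z 1%Z [VInt 0; VInt 1] (VInt 0) (VInt 1) [].

Fixpoint ins_after (b v : vertex) (l : list vertex) : list vertex :=
  match l with
  | [] => []
  | x :: l' => if veqb x b then x :: v :: l' else x :: ins_after b v l'
  end.

(* left neighbour of b on the upper path = counterclockwise boundary neighbour *)
Fixpoint left_nb (b : vertex) (l : list vertex) : vertex :=
  match l with
  | x :: ((y :: _) as l') => if veqb y b then x else left_nb b l'
  | _ => b
  end.

(* right neighbour of r on the upper path = clockwise boundary neighbour *)
Fixpoint right_nb (r : vertex) (l : list vertex) : vertex :=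
  match l with
  | x :: ((y :: _) as l') => if veqb x r then y else right_nb r l'
  | _ => r
  end.

Definition remove_v (v : vertex) (l : list vertex) : list vertex :=
  filter (fun x => negb (veqb x v)) l.

Definition replace_v (v v' : vertex) (l : list vertex) : list vertex :=
  map (fun x => if veqb x v then v' else x) l.

Definition step (j : nat) (x : letter) (s : state) : state :=
  let b := bact s in let r := ract s in
  let v := VNew (S j) in
  match x with
  | LB => mkState (lo s) (hi s) (ins_after b v (top s)) v r
                  (tris s ++ [(b, r, v)])
  | LR => mkState (lo s) (hi s) (ins_after b v (top s)) b v
                  (tris s ++ [(b, r, v)])
  | Lb => match b with
          | VInt m => let b' := VInt (m - 1) in
                      mkState (m - 1)%Z (hi s) (replace_v b b' (top s)) b' r
                              (tris s ++ [(b', b, r)])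
          | VNew _ => let b' := left_nb b (top s) in
                      mkState (lo s) (hi s) (remove_v b (top s)) b' r
                              (tris s ++ [(b', b, r)])
          end
  | Lr => match r with
          | VInt m => let r' := VInt (m + 1) in
                      mkState (lo s) (m + 1)%Z (replace_v r r' (top s)) b r'
                              (tris s ++ [(b, r, r')])
          | VNew _ => let r' := right_nb r (top s) in
                      mkState (lo s) (hi s) (remove_v r (top s)) b r'
                              (tris s ++ [(b, r, r')])
          end
  end.

Fixpoint build_from (j : nat) (w : list letter) (s : state) : state :=
  match w with
  | [] => s
  | x :: w' => build_from (S j) w' (step j x s)
  end.

Definition D (X : list letter) : state := build_from 0 X init_state.

(* rooted triangulations: the triangulation together with the index
   (1-based step number) of the root triangle *)
Record rooted := mkRooted { tri : state; root : nat }.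

Definition Tplus (X : list letter) : rooted := mkRooted (D X) 1.
Definition T (X : list letter) (k : nat) : rooted := mkRooted (D X) k.

Definition Zrange (a b : Z) : list Z :=
  map (fun i => (a + Z.of_nat i)%Z) (seq 0 (Z.to_nat (b - a + 1))).

(* vertices on the topological boundary of the support: the integers of the
   real segment [lo, hi] and the vertices of the upper boundary path *)
Definition bdry_vertices (s : state) : list vertex :=
  nodup vertex_eq_dec (map VInt (Zrange (lo s) (hi s)) ++ top s).

Definition bdry_size (Tr : rooted) : nat := length (bdry_vertices (tri Tr)).

Fixpoint words (n : nat) : list (list letter) :=
  match n with
  | O => [[]]
  | S n' => flat_map (fun w => map (fun x => x :: w) [LB; Lb; LR; Lr]) (words n')
  end.

Definition sample_space (n : nat) : list (list letter * nat) :=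
  list_prod (words n) (seq 1 n).

Definition prob_bdry_ge (n : nat) (t : R) : R :=
  INR (length (filter
         (fun p => if Rle_dec (t * sqrt (INR n)) (INR (bdry_size (T (fst p) (snd p))))
                   then true else false)
         (sample_space n)))
  / INR (length (sample_space n)).

(* Main.v *)
Require Import Defs.
From Stdlib Require Import Reals Lra Lia Psatz ZArith Arith List Bool Permutation.
Import ListNotations.

Lemma veqb_refl u : veqb u u = true.
Proof. unfold veqb; destruct (vertex_eq_dec u u); congruence. Qed.
Lemma veqb_neq u v : u <> v -> veqb u v = false.
Proof. unfold veqb; destruct (vertex_eq_dec u v); congruence. Qed.

Lemma ins_after_split b v l1 l2 : ~ In b l1 ->
  ins_after b v (l1 ++ b :: l2) = l1 ++ b :: v :: l2.
Proof.
  induction l1 as [|x l1 IH]; intros H; simpl.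
  - now rewrite veqb_refl.
  - rewrite veqb_neq by (intro E; apply H; left; auto).
    rewrite IH by (intro E; apply H; right; auto). reflexivity.
Qed.

Lemma last_cons_gen {A} (c a : A) l : last (c :: l) a = last l c.
Proof.
  revert c a; induction l as [|d l IH]; intros c a; auto.
  change (last (d :: l) a = last (d :: l) c). rewrite (IH d a), (IH d c). reflexivity.
Qed.

Lemma left_nb_cons2 b x y l : left_nb b (x :: y :: l) = if veqb y b then x else left_nb b (y :: l).
Proof. reflexivity. Qed.
Lemma right_nb_cons2 r x y l : right_nb r (x :: y :: l) = if veqb x r then y else right_nb r (y :: l).
Proof. reflexivity. Qed.

Lemma left_nb_split b a l1 l2 : ~ In b (a :: l1) ->
  left_nb b (a :: l1 ++ b :: l2) = last l1 a.
Proof.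
  revert a; induction l1 as [|c l1 IH]; intros a H; simpl app.
  - rewrite left_nb_cons2. now rewrite veqb_refl.
  - rewrite left_nb_cons2, veqb_neq by (intro E; apply H; right; left; auto).
    rewrite IH by (intro E; apply H; right; exact E).
    symmetry; apply last_cons_gen.
Qed.

Lemma right_nb_split r y l1 l2 : ~ In r l1 ->
  right_nb r (l1 ++ r :: y :: l2) = y.
Proof.
  induction l1 as [|x l1 IH]; intros H.
  - simpl app. rewrite right_nb_cons2. now rewrite veqb_refl.
  - assert (H' : ~ In r l1) by (intro E; apply H; right; auto).
    specialize (IH H'). revert IH.
    destruct l1 as [|z l1]; simpl app; intros IH; rewrite right_nb_cons2, veqb_neq by (intro E; apply H; left; auto); exact IH.
Qed.

Lemma remove_v_notin b l : ~ In b l -> remove_v b l = l.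
Proof.
  induction l as [|x l IH]; intros H; simpl; auto.
  rewrite veqb_neq by (intro E; apply H; left; auto). simpl.
  rewrite IH by (intro E; apply H; right; auto). reflexivity.
Qed.

Lemma remove_v_split b l1 l2 : ~ In b l1 -> ~ In b l2 ->
  remove_v b (l1 ++ b :: l2) = l1 ++ l2.
Proof.
  intros H1 H2. unfold remove_v. rewrite filter_app. simpl. rewrite veqb_refl. simpl.
  fold (remove_v b l1). fold (remove_v b l2).
  now rewrite !remove_v_notin.
Qed.

Lemma replace_v_notin v v' l : ~ In v l -> replace_v v v' l = l.
Proof.
  induction l as [|x l IH]; intros H; simpl; auto.
  rewrite veqb_neq by (intro E; apply H; left; auto).
  rewrite IH by (intro E; apply H; right; auto). reflexivity.
Qed.

Definition isNew (j:nat) (v:vertex) := exists k, v = VNew k /\ (k <= j)%nat.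

Definition Inv (j:nat) (s:state) (L X R Y:nat) : Prop :=
  exists Bs Rs,
    lo s = (- Z.of_nat L)%Z /\ hi s = (1 + Z.of_nat R)%Z /\
    top s = VInt (lo s) :: Bs ++ Rs ++ [VInt (hi s)] /\
    length Bs = X /\ length Rs = Y /\
    bact s = last Bs (VInt (lo s)) /\ ract s = hd (VInt (hi s)) Rs /\
    NoDup (Bs ++ Rs) /\ Forall (isNew j) (Bs ++ Rs) /\ (L + X + R + Y <= j)%nat.

Lemma Inv_init : Inv 0 init_state 0 0 0 0.
Proof.
  exists [], []. simpl. repeat split; auto. constructor.
Qed.

Lemma isNew_notInt j z l : Forall (isNew j) l -> ~ In (VInt z) l.
Proof.
  intros HF HI. rewrite Forall_forall in HF. destruct (HF _ HI) as [k [E _]]. discriminate.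
Qed.

Lemma isNew_fresh j l : Forall (isNew j) l -> ~ In (VNew (S j)) l.
Proof.
  intros HF HI. rewrite Forall_forall in HF. destruct (HF _ HI) as [k [E Hk]].
  injection E; lia.
Qed.

Lemma isNew_mono j l : Forall (isNew j) l -> Forall (isNew (S j)) l.
Proof.
  intros HF; eapply Forall_impl; [|exact HF]. intros v [k [E Hk]]; exists k; split; auto; lia.
Qed.
Lemma last_snoc {A} (l : list A) (b d : A) : last (l ++ [b]) d = b.
Proof. apply last_last. Qed.

Lemma nodup_mid {A} (l1 l2 : list A) (v : A) :
  ~ In v (l1 ++ l2) -> NoDup (l1 ++ l2) -> NoDup (l1 ++ v :: l2).
Proof.
  intros H1 H2. apply Permutation_NoDup with (v :: l1 ++ l2).
  - apply Permutation_middle.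
  - constructor; auto.
Qed.

Lemma snoc_or_nil {A} (l : list A) : l = [] \/ exists l0 b, l = l0 ++ [b].
Proof.
  destruct l as [|x l] using rev_ind; [left; auto | right; eauto].
Qed.

Ltac inv_destr H := destruct H as (Bs & Rs & Hlo & Hhi & Htop & HX & HY & Hb & Hr & Hnd & Hf & Hsum).

Lemma step_LB j s L X R Y : Inv j s L X R Y -> Inv (S j) (step j LB s) L (S X) R Y.
Proof.
  intros H; inv_destr H. unfold step. simpl.
  exists (Bs ++ [VNew (S j)]), Rs. simpl.
  assert (Hfr := isNew_fresh _ _ Hf).
  repeat split; auto.
  - rewrite Htop, Hb. destruct (snoc_or_nil Bs) as [->|(Bs0 & b & ->)].
    + simpl. rewrite veqb_refl. reflexivity.
    + rewrite last_snoc.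
      replace (VInt (lo s) :: (Bs0 ++ [b]) ++ Rs ++ [VInt (hi s)]) with
        ((VInt (lo s) :: Bs0) ++ b :: (Rs ++ [VInt (hi s)])) by (simpl; rewrite <- app_assoc; reflexivity).
      rewrite ins_after_split. * simpl. rewrite <- !app_assoc. reflexivity.
      * intros [E|E].
        -- apply (isNew_notInt _ (lo s) _ Hf). rewrite <- E. apply in_or_app; left; apply in_or_app; right; left; auto.
        -- rewrite <- app_assoc in Hnd. apply NoDup_remove_2 in Hnd. apply Hnd. apply in_or_app; auto.
  - rewrite length_app; simpl; lia.
  - symmetry; apply last_snoc.
  - rewrite <- app_assoc. apply nodup_mid; auto.
  - rewrite <- app_assoc. apply Forall_app in Hf as [Hf1 Hf2].
    apply Forall_app; split; [apply isNew_mono; auto|]. constructor.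
    + exists (S j); auto. + apply isNew_mono; auto.
  - lia.
Qed.
Lemma replace_v_split v v' l1 l2 : ~ In v l1 -> ~ In v l2 ->
  replace_v v v' (l1 ++ v :: l2) = l1 ++ v' :: l2.
Proof.
  intros H1 H2. unfold replace_v. rewrite map_app. simpl. rewrite veqb_refl.
  fold (replace_v v v' l1). fold (replace_v v v' l2).
  now rewrite !replace_v_notin.
Qed.

Lemma right_nb_split2 r l1 l d : ~ In r l1 ->
  right_nb r (l1 ++ r :: (l ++ [d])) = hd d l.
Proof.
  intros H. destruct l as [|y l]; simpl; apply right_nb_split; auto.
Qed.

Lemma step_LR j s L X R Y : Inv j s L X R Y -> Inv (S j) (step j LR s) L X R (S Y).
Proof.
  intros H; inv_destr H. unfold step. simpl.
  exists Bs, (VNew (S j) :: Rs). simpl.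
  assert (Hfr := isNew_fresh _ _ Hf).
  repeat split; auto.
  - rewrite Htop, Hb. destruct (snoc_or_nil Bs) as [->|(Bs0 & b & ->)].
    + simpl. rewrite veqb_refl. reflexivity.
    + rewrite last_snoc.
      replace (VInt (lo s) :: (Bs0 ++ [b]) ++ Rs ++ [VInt (hi s)]) with
        ((VInt (lo s) :: Bs0) ++ b :: (Rs ++ [VInt (hi s)])) by (simpl; rewrite <- app_assoc; reflexivity).
      rewrite ins_after_split. * simpl. rewrite <- !app_assoc. reflexivity.
      * intros [E|E].
        -- apply (isNew_notInt _ (lo s) _ Hf). rewrite <- E. apply in_or_app; left; apply in_or_app; right; left; auto.
        -- rewrite <- app_assoc in Hnd. apply NoDup_remove_2 in Hnd. apply Hnd. apply in_or_app; auto.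
  - apply nodup_mid; auto.
  - apply Forall_app in Hf as [Hf1 Hf2].
    apply Forall_app; split; [apply isNew_mono; auto|]. constructor.
    + exists (S j); auto. + apply isNew_mono; auto.
  - lia.
Qed.

Lemma step_Lb j s L X R Y : Inv j s L X R Y ->
  Inv (S j) (step j Lb s) (if Nat.eqb X 0 then S L else L) (X - 1) R Y.
Proof.
  intros H; inv_destr H.
  destruct (snoc_or_nil Bs) as [->|(Bs0 & b & ->)].
  - simpl in Hb, HX. subst X. unfold step. cbv zeta. rewrite Hb. simpl.
    exists [], Rs. cbn -[Z.of_nat Z.add Z.sub Z.opp]. repeat split; auto.
    + rewrite Hlo. lia.
    + rewrite Htop. simpl.
      rewrite veqb_refl, replace_v_notin; auto.
      intros HI. apply in_app_or in HI as [HI|[HI|[]]].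
        -- exact (isNew_notInt _ _ _ Hf HI).
        -- injection HI. lia.
    + eapply Forall_impl; [|exact Hf]. intros v [k [E Hk]]; exists k; split; auto; lia.
    + lia.
  - rewrite last_snoc in Hb.
    rewrite <- app_assoc in Hf, Hnd. simpl in Hf, Hnd.
    assert (Hb' : In b (Bs0 ++ b :: Rs)) by (apply in_or_app; right; left; auto).
    pose proof Hf as Hf'. rewrite Forall_forall in Hf'. destruct (Hf' _ Hb') as [k [Ek Hk]].
    assert (Hnb : ~ In b (Bs0 ++ Rs)) by (eapply NoDup_remove_2; eauto).
    assert (HnI : ~ In b (VInt (lo s) :: Bs0)).
    { intros [E|E]. - congruence. - apply Hnb, in_or_app; auto. }
    revert Hb; subst b; intros Hb.
    unfold step. cbv zeta. rewrite Hb. simpl.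
    rewrite length_app in HX; simpl in HX.
    replace (Nat.eqb X 0) with false by (symmetry; apply Nat.eqb_neq; lia).
    exists Bs0, Rs. simpl. repeat split; auto.
    + rewrite Htop.
      replace (VInt (lo s) :: (Bs0 ++ [VNew k]) ++ Rs ++ [VInt (hi s)]) with
        ((VInt (lo s) :: Bs0) ++ VNew k :: (Rs ++ [VInt (hi s)])) by (simpl; rewrite <- app_assoc; reflexivity).
      rewrite remove_v_split; auto.
      intros HI; apply in_app_or in HI as [HI|[HI|[]]].
      * apply Hnb, in_or_app; auto.
      * discriminate.
    + lia.
    + rewrite Htop.
      replace (VInt (lo s) :: (Bs0 ++ [VNew k]) ++ Rs ++ [VInt (hi s)]) with
        (VInt (lo s) :: Bs0 ++ VNew k :: (Rs ++ [VInt (hi s)])) by (simpl; rewrite <- app_assoc; reflexivity).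
      apply left_nb_split; auto.
    + eapply NoDup_remove_1; eauto.
    + apply Forall_app in Hf as [Hf1 Hf2]. inversion Hf2; subst.
      apply Forall_app; split; apply isNew_mono; auto.
    + lia.
Qed.

Lemma step_Lr j s L X R Y : Inv j s L X R Y ->
  Inv (S j) (step j Lr s) L X (if Nat.eqb Y 0 then S R else R) (Y - 1).
Proof.
  intros H; inv_destr H.
  destruct Rs as [|r Rs0].
  - simpl in Hr, HY. subst Y. unfold step. cbv zeta. rewrite Hr. simpl.
    exists Bs, []. cbn -[Z.of_nat Z.add]. repeat split; auto.
    + rewrite Hhi. lia.
    + rewrite Htop. simpl app.
      replace (VInt (lo s) :: Bs ++ [VInt (hi s)]) with ((VInt (lo s) :: Bs) ++ VInt (hi s) :: []) by reflexivity.
      rewrite replace_v_split. * reflexivity.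
      * intros [HI|HI]. -- injection HI. lia.
        -- rewrite app_nil_r in Hf. exact (isNew_notInt _ _ _ Hf HI).
      * simpl; auto.
    + eapply Forall_impl; [|exact Hf]. intros v [k [E Hk]]; exists k; split; auto; lia.
    + lia.
  - simpl in Hr.
    assert (Hb' : In r (Bs ++ r :: Rs0)) by (apply in_or_app; right; left; auto).
    pose proof Hf as Hf'. rewrite Forall_forall in Hf'. destruct (Hf' _ Hb') as [k [Ek Hk]].
    assert (Hnb : ~ In r (Bs ++ Rs0)) by (eapply NoDup_remove_2; eauto).
    assert (HnI : ~ In r (VInt (lo s) :: Bs)).
    { intros [E|E]. - congruence. - apply Hnb, in_or_app; auto. }
    revert Hr; subst r; intros Hr.
    unfold step. cbv zeta. rewrite Hr. simpl.
    simpl in HY.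
    replace (Nat.eqb Y 0) with false by (symmetry; apply Nat.eqb_neq; lia).
    exists Bs, Rs0. simpl. repeat split; auto.
    + rewrite Htop.
      replace (VInt (lo s) :: Bs ++ (VNew k :: Rs0) ++ [VInt (hi s)]) with
        ((VInt (lo s) :: Bs) ++ VNew k :: (Rs0 ++ [VInt (hi s)])) by reflexivity.
      rewrite remove_v_split; auto.
      intros HI; apply in_app_or in HI as [HI|[HI|[]]].
      * apply Hnb, in_or_app; auto.
      * discriminate.
    + lia.
    + rewrite Htop.
      replace (VInt (lo s) :: Bs ++ (VNew k :: Rs0) ++ [VInt (hi s)]) with
        ((VInt (lo s) :: Bs) ++ VNew k :: (Rs0 ++ [VInt (hi s)])) by reflexivity.
      apply right_nb_split2; auto.
    + eapply NoDup_remove_1; eauto.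
    + apply Forall_app in Hf as [Hf1 Hf2]. inversion Hf2; subst.
      apply Forall_app; split; apply isNew_mono; auto.
    + lia.
Qed.
Lemma bdry_bound j s L X R Y : Inv j s L X R Y ->
  (length (bdry_vertices s) <= 2 + L + R + X + Y)%nat.
Proof.
  intros H; inv_destr H. unfold bdry_vertices.
  set (M := map VInt (Zrange (lo s) (hi s)) ++ Bs ++ Rs).
  assert (HM : length M = (2 + L + R + X + Y)%nat).
  { unfold M, Zrange. rewrite length_app, !length_map, length_seq, length_app.
    rewrite Hlo, Hhi. lia. }
  rewrite <- HM. apply NoDup_incl_length; [apply NoDup_nodup|].
  intros v Hv. apply nodup_In in Hv. unfold M.
  assert (Hin : forall z, (lo s <= z <= hi s)%Z -> In (VInt z) (map VInt (Zrange (lo s) (hi s)))).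
  { intros z Hz. apply in_map. unfold Zrange. apply in_map_iff.
    exists (Z.to_nat (z - lo s)). split. - lia. - apply in_seq. lia. }
  apply in_app_or in Hv as [Hv|Hv]; [apply in_or_app; auto|].
  rewrite Htop in Hv. destruct Hv as [<-|Hv].
  - apply in_or_app; left; apply Hin; lia.
  - apply in_app_or in Hv as [Hv|Hv].
    + apply in_or_app; right; apply in_or_app; auto.
    + apply in_app_or in Hv as [Hv|[<-|[]]].
      * apply in_or_app; right; apply in_or_app; auto.
      * apply in_or_app; left; apply Hin; lia.
Qed.

Lemma Inv_build : forall w j s L X R Y, Inv j s L X R Y ->
  exists L' X' R' Y', Inv (j + length w) (build_from j w s) L' X' R' Y'.
Proof.
  induction w as [|x w IH]; intros j s L X R Y H.
  - exists L, X, R, Y. simpl. rewrite Nat.add_0_r. auto.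
  - simpl. replace (j + S (length w))%nat with (S j + length w)%nat by lia.
    destruct x; eapply IH.
    + apply step_LB; eauto.
    + apply step_Lb; eauto.
    + apply step_LR; eauto.
    + apply step_Lr; eauto.
Qed.
Open Scope R_scope.

Definition sumR {A} (f : A -> R) (l : list A) : R := fold_right (fun a acc => f a + acc) 0 l.

Lemma sumR_app {A} (f : A -> R) l1 l2 : sumR f (l1 ++ l2) = sumR f l1 + sumR f l2.
Proof. induction l1; simpl; [lra|]. unfold sumR in *; simpl; rewrite IHl1; lra. Qed.

Lemma sumR_flat_map {A B} (f : B -> R) (g : A -> list B) l :
  sumR f (flat_map g l) = sumR (fun a => sumR f (g a)) l.
Proof. induction l; simpl; auto. rewrite sumR_app, IHl. reflexivity. Qed.

Lemma sumR_plus {A} (f g : A -> R) l : sumR (fun a => f a + g a) l = sumR f l + sumR g l.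
Proof. induction l; unfold sumR in *; simpl; [lra|]. rewrite IHl; lra. Qed.

Lemma sumR_ext {A} (f g : A -> R) l : (forall a, f a = g a) -> sumR f l = sumR g l.
Proof. intros H; induction l; unfold sumR in *; simpl; auto. rewrite H, IHl; auto. Qed.

Definition phi (nu : R) (X : nat) := exp (nu * INR X) + 9 * exp (- (nu * INR X)).
Definition Phi (lam nu : R) (L X R0 Y : nat) := exp (lam * INR (L + R0)) * phi nu X * phi nu Y.

Lemma phi_pos nu X : 0 < phi nu X.
Proof. unfold phi. pose proof (exp_pos (nu * INR X)). pose proof (exp_pos (- (nu * INR X))). lra. Qed.

Lemma poly_ineq u : 0 <= u -> 10 * u ^ 9 <= 9 * u ^ 10 + 1.
Proof.
  intros Hu.
  assert (E : 9 * u ^ 10 + 1 - 10 * u ^ 9 = (u - 1) ^ 2 *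
    (1 + 2*u + 3*u^2 + 4*u^3 + 5*u^4 + 6*u^5 + 7*u^6 + 8*u^7 + 9*u^8)) by ring.
  assert (0 <= (u - 1) ^ 2 *
    (1 + 2*u + 3*u^2 + 4*u^3 + 5*u^4 + 6*u^5 + 7*u^6 + 8*u^7 + 9*u^8)).
  { apply Rmult_le_pos; [apply pow2_ge_0|].
    repeat (apply Rplus_le_le_0_compat || apply Rmult_le_pos || apply pow_le); lra. }
  lra.
Qed.

Lemma exp_nat k x : exp (INR k * x) = exp x ^ k.
Proof.
  induction k as [|k IH]; simpl pow. - simpl. rewrite Rmult_0_l, exp_0; auto.
  - rewrite S_INR, Rmult_plus_distr_r, Rmult_1_l, exp_plus, IH. ring.
Qed.

Lemma exp_ineq_key lam : 0 <= lam -> 10 * exp lam <= 9 * exp (5 * lam / 4) + exp (- (5 * lam / 4)).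
Proof.
  intros Hl. set (u := exp (lam / 4)).
  assert (Hu : 0 < u) by apply exp_pos.
  assert (E4 : exp lam = u ^ 4) by (unfold u; rewrite <- exp_nat; f_equal; simpl; lra).
  assert (E5 : exp (5 * lam / 4) = u ^ 5) by (unfold u; rewrite <- exp_nat; f_equal; simpl; lra).
  rewrite exp_Ropp, E4, E5.
  pose proof (poly_ineq u (Rlt_le _ _ Hu)).
  assert (H5 : 0 < u ^ 5) by (apply pow_lt; auto).
  apply Rmult_le_reg_r with (u ^ 5); auto.
  replace ((9 * u ^ 5 + / u ^ 5) * u ^ 5) with (9 * u ^ 10 + 1) by (field; lra).
  replace (10 * u ^ 4 * u ^ 5) with (10 * u ^ 9) by ring. exact H.
Qed.
Lemma phi_rec nu X : phi nu (S (S X)) + phi nu X = (exp nu + exp (- nu)) * phi nu (S X).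
Proof.
  unfold phi. rewrite !S_INR.
  replace (nu * (INR X + 1 + 1)) with (nu * INR X + nu + nu) by ring.
  replace (nu * (INR X + 1)) with (nu * INR X + nu) by ring.
  rewrite !Ropp_plus_distr, !exp_plus, !exp_Ropp.
  assert (exp nu <> 0) by apply exp_neq_0.
  assert (exp (nu * INR X) <> 0) by apply exp_neq_0.
  field; auto.
Qed.

Lemma blue_step lam L X R0 Y : 0 <= lam ->
  Phi lam (5*lam/4) L (S X) R0 Y + Phi lam (5*lam/4) (if Nat.eqb X 0 then S L else L) (X-1) R0 Y
  <= (exp (5*lam/4) + exp (-(5*lam/4))) * Phi lam (5*lam/4) L X R0 Y.
Proof.
  intros Hl. unfold Phi. set (nu := 5*lam/4).
  pose proof (phi_pos nu Y) as HY. pose proof (exp_pos (lam * INR (L + R0))) as HE.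
  destruct X as [|X].
  - replace (if Nat.eqb 0 0 then S L else L) with (S L) by reflexivity.
    replace (0 - 1)%nat with 0%nat by reflexivity.
    replace (lam * INR (S L + R0)) with (lam * INR (L + R0) + lam) by (rewrite plus_Sn_m, S_INR; ring).
    rewrite exp_plus.
    assert (Hk : phi nu 1 + exp lam * phi nu 0 <= (exp nu + exp (- nu)) * phi nu 0).
    { unfold phi. simpl INR. rewrite Rmult_0_r, Ropp_0, exp_0, Rmult_1_r.
      pose proof (exp_ineq_key lam Hl). fold nu in H. lra. }
    replace (exp (lam * INR (L + R0)) * phi nu 1 * phi nu Y +
             exp (lam * INR (L + R0)) * exp lam * phi nu 0 * phi nu Y) with
      ((phi nu 1 + exp lam * phi nu 0) * (exp (lam * INR (L + R0)) * phi nu Y)) by ring.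
    replace ((exp nu + exp (- nu)) * (exp (lam * INR (L + R0)) * phi nu 0 * phi nu Y)) with
      (((exp nu + exp (- nu)) * phi nu 0) * (exp (lam * INR (L + R0)) * phi nu Y)) by ring.
    apply Rmult_le_compat_r; [|exact Hk]. apply Rmult_le_pos; lra.
  - replace (if Nat.eqb (S X) 0 then S L else L) with L by reflexivity. replace (S X - 1)%nat with X by lia.
    pose proof (phi_rec nu X). 
    replace (exp (lam * INR (L + R0)) * phi nu (S (S X)) * phi nu Y +
             exp (lam * INR (L + R0)) * phi nu X * phi nu Y) with
      ((phi nu (S (S X)) + phi nu X) * (exp (lam * INR (L + R0)) * phi nu Y)) by ring.
    rewrite H. right; ring.
Qed.

Lemma Phi_swap lam nu L X R0 Y : Phi lam nu L X R0 Y = Phi lam nu R0 Y L X.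
Proof. unfold Phi. rewrite Nat.add_comm. ring. Qed.

Lemma Phi_pos lam nu L X R0 Y : 0 < Phi lam nu L X R0 Y.
Proof. unfold Phi. pose proof (phi_pos nu X). pose proof (phi_pos nu Y).
  pose proof (exp_pos (lam * INR (L + R0))). repeat apply Rmult_lt_0_compat; auto. Qed.

Lemma all_step lam L X R0 Y : 0 <= lam ->
  Phi lam (5*lam/4) L (S X) R0 Y + Phi lam (5*lam/4) (if Nat.eqb X 0 then S L else L) (X-1) R0 Y
  + Phi lam (5*lam/4) L X R0 (S Y) + Phi lam (5*lam/4) L X (if Nat.eqb Y 0 then S R0 else R0) (Y-1)
  <= 2 * (exp (5*lam/4) + exp (-(5*lam/4))) * Phi lam (5*lam/4) L X R0 Y.
Proof.
  intros Hl. pose proof (blue_step lam L X R0 Y Hl). pose proof (blue_step lam R0 Y L X Hl).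
  rewrite <- (Phi_swap lam _ L X R0 (S Y)), <- (Phi_swap lam _ L X _ (Y - 1)),
    <- (Phi_swap lam _ L X R0 Y) in H0. lra.
Qed.
Lemma exp_mono x y : x <= y -> exp x <= exp y.
Proof. intros [H|H]; [left; apply exp_increasing; auto | right; subst; auto]. Qed.

Lemma exp_le_phi lam X : 0 <= lam -> exp (lam * INR X) <= phi (5*lam/4) X.
Proof.
  intros Hl. unfold phi. pose proof (exp_pos (- (5 * lam / 4 * INR X))).
  assert (exp (lam * INR X) <= exp (5 * lam / 4 * INR X)).
  { apply exp_mono. pose proof (pos_INR X). nra. }
  lra.
Qed.

Lemma base_bound lam j s L X R0 Y : 0 <= lam -> Inv j s L X R0 Y ->
  exp (lam * INR (length (bdry_vertices s))) <= exp (2*lam) * Phi lam (5*lam/4) L X R0 Y.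
Proof.
  intros Hl H. pose proof (bdry_bound _ _ _ _ _ _ H) as Hb.
  apply le_INR in Hb.
  apply Rle_trans with (exp (lam * INR (2 + L + R0 + X + Y))).
  { apply exp_mono. apply Rmult_le_compat_l; auto. }
  replace (lam * INR (2 + L + R0 + X + Y)) with (2 * lam + lam * INR (L + R0) + lam * INR X + lam * INR Y)
    by (rewrite !plus_INR; simpl; ring).
  rewrite !exp_plus. unfold Phi.
  pose proof (exp_le_phi lam X Hl). pose proof (exp_le_phi lam Y Hl).
  pose proof (exp_pos (2*lam)). pose proof (exp_pos (lam * INR (L + R0))).
  pose proof (exp_pos (lam * INR X)). pose proof (exp_pos (lam * INR Y)).
  replace (exp (2 * lam) * (exp (lam * INR (L + R0)) * phi (5 * lam / 4) X * phi (5 * lam / 4) Y))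
    with ((exp (2 * lam) * exp (lam * INR (L + R0))) * (phi (5 * lam / 4) X * phi (5 * lam / 4) Y)) by ring.
  rewrite Rmult_assoc. apply Rmult_le_compat_l.
  - apply Rmult_le_pos; lra.
  - apply Rmult_le_compat; lra.
Qed.

Lemma main_count lam : 0 <= lam -> forall n j s L X R0 Y, Inv j s L X R0 Y ->
  sumR (fun w => exp (lam * INR (length (bdry_vertices (build_from j w s))))) (words n)
  <= (2 * (exp (5*lam/4) + exp (-(5*lam/4)))) ^ n * (exp (2*lam) * Phi lam (5*lam/4) L X R0 Y).
Proof.
  intros Hl n. induction n as [|n IH]; intros j s L X R0 Y H.
  - simpl. unfold sumR; simpl. pose proof (base_bound lam j s L X R0 Y Hl H). lra.
  - change (words (S n)) with
      (flat_map (fun w => map (fun x => x :: w) [LB; Lb; LR; Lr]) (words n)).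
    rewrite sumR_flat_map.
    set (G := fun x w => exp (lam * INR (length (bdry_vertices (build_from (S j) w (step j x s)))))).
    rewrite (sumR_ext _ (fun w => G LB w + G Lb w + G LR w + G Lr w)).
    2:{ intros w. unfold sumR, G. simpl. ring. }
    rewrite !sumR_plus.
    pose proof (IH _ _ _ _ _ _ (step_LB _ _ _ _ _ _ H)) as H1.
    pose proof (IH _ _ _ _ _ _ (step_Lb _ _ _ _ _ _ H)) as H2.
    pose proof (IH _ _ _ _ _ _ (step_LR _ _ _ _ _ _ H)) as H3.
    pose proof (IH _ _ _ _ _ _ (step_Lr _ _ _ _ _ _ H)) as H4.
    fold (G LB) in H1. fold (G Lb) in H2. fold (G LR) in H3. fold (G Lr) in H4.
    pose proof (all_step lam L X R0 Y Hl) as HA.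
    set (K := 2 * (exp (5 * lam / 4) + exp (- (5 * lam / 4)))) in *.
    assert (HK : 0 <= K ^ n) by (apply pow_le; unfold K; pose proof (exp_pos (5*lam/4)); pose proof (exp_pos (-(5*lam/4))); lra).
    pose proof (exp_pos (2*lam)).
    simpl pow.
    apply Rle_trans with (K ^ n * exp (2 * lam) *
      (Phi lam (5 * lam / 4) L (S X) R0 Y + Phi lam (5 * lam / 4) (if Nat.eqb X 0 then S L else L) (X - 1) R0 Y +
       Phi lam (5 * lam / 4) L X R0 (S Y) + Phi lam (5 * lam / 4) L X (if Nat.eqb Y 0 then S R0 else R0) (Y - 1))).
    + lra.
    + replace (K * K ^ n * (exp (2 * lam) * Phi lam (5 * lam / 4) L X R0 Y)) with
        (K ^ n * exp (2 * lam) * (K * Phi lam (5 * lam / 4) L X R0 Y)) by ring.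
      apply Rmult_le_compat_l; [apply Rmult_le_pos; lra|]. exact HA.
Qed.
Lemma words_length n : length (words n) = (4 ^ n)%nat.
Proof.
  induction n as [|n IH]; [reflexivity|].
  change (words (S n)) with (flat_map (fun w => map (fun x => x :: w) [LB; Lb; LR; Lr]) (words n)).
  assert (H : forall l : list (list letter),
    length (flat_map (fun w => map (fun x => x :: w) [LB; Lb; LR; Lr]) l) = (4 * length l)%nat).
  { induction l; [reflexivity|]. cbn [flat_map]. rewrite length_app, IHl. simpl. lia. }
  rewrite H, IH. simpl. lia.
Qed.

Lemma words_in n w : In w (words n) -> length w = n.
Proof.
  revert w; induction n as [|n IH]; intros w Hw.
  - simpl in Hw. destruct Hw as [<-|[]]; auto.
  - change (words (S n)) with (flat_map (fun w => map (fun x => x :: w) [LB; Lb; LR; Lr]) (words n)) in Hw.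
    apply in_flat_map in Hw as [w0 [H0 H1]].
    simpl in H1. destruct H1 as [<-|[<-|[<-|[<-|[]]]]]; simpl; f_equal; auto.
Qed.

Lemma filter_prod_length {A B} (f : A * B -> bool) (g : A -> bool) l m :
  (forall a b, f (a, b) = g a) ->
  length (filter f (list_prod l m)) = (length (filter g l) * length m)%nat.
Proof.
  intros Hfg. induction l as [|a l IH]; simpl; auto.
  rewrite filter_app, length_app, IH.
  assert (E : length (filter f (map (fun y => (a, y)) m)) = if g a then length m else 0%nat).
  { clear IH. destruct (g a) eqn:Eg; induction m as [|b m IHm]; simpl; auto; rewrite Hfg, Eg; simpl; rewrite IHm; auto. }
  rewrite E. destruct (g a); simpl; lia.
Qed.

Lemma count_le_sum {A} (g : A -> bool) (G : A -> R) (c : R) l :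
  (forall a, 0 <= G a) -> (forall a, g a = true -> c <= G a) -> 0 <= c ->
  INR (length (filter g l)) * c <= sumR G l.
Proof.
  intros HG Hg Hc. induction l as [|a l IH]; simpl.
  - unfold sumR; simpl; lra.
  - unfold sumR in *; simpl. destruct (g a) eqn:E.
    + simpl length. rewrite S_INR. pose proof (Hg a E). lra.
    + pose proof (HG a). lra.
Qed.

Lemma filter_len_le {A} (g : A -> bool) l : (length (filter g l) <= length l)%nat.
Proof. induction l; simpl; auto. destruct (g a); simpl; lia. Qed.

Lemma bdry_le_n w : (length (bdry_vertices (D w)) <= 2 + length w)%nat.
Proof.
  destruct (Inv_build w 0 init_state 0 0 0 0 Inv_init) as (L & X & R0 & Y & H).
  pose proof (bdry_bound _ _ _ _ _ _ H). destruct H as (Bs & Rs & _ & _ & _ & _ & _ & _ & _ & _ & _ & Hs).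
  unfold D. simpl in Hs. lia.
Qed.

Lemma exp_small : exp (81/128) <= 2.
Proof.
  assert (E : exp (81/128) = exp (81/1024) ^ 8) by (rewrite <- exp_nat; f_equal; simpl; lra).
  assert (H1 : exp (81/1024) <= 1024/943).
  { pose proof (exp_ineq1_le (- (81/1024))). rewrite exp_Ropp in H.
    pose proof (exp_pos (81/1024)).
    apply Rmult_le_reg_r with (943/1024); [lra|].
    replace (1024/943 * (943/1024)) with 1 by field.
    apply Rmult_le_reg_l with (/ exp (81/1024)); [apply Rinv_0_lt_compat; lra|].
    rewrite <- Rmult_assoc, Rinv_l, Rmult_1_r by lra. lra. }
  rewrite E. apply Rle_trans with ((1024/943)^8).
  - apply pow_incr. split; [left; apply exp_pos| exact H1].
  - simpl. lra.
Qed.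

Lemma exp_big : 50 <= exp (22/5).
Proof.
  assert (E : exp (22/5) = exp (11/80) ^ 32) by (rewrite <- exp_nat; f_equal; simpl; lra).
  rewrite E. apply Rle_trans with ((91/80)^32).
  - simpl. lra.
  - apply pow_incr. split; [lra|]. pose proof (exp_ineq1_le (11/80)). lra.
Qed.

Lemma sinh_pos x : 0 < x -> 0 < sinh x.
Proof. intros H. rewrite <- sinh_0. apply sinh_lt; auto. Qed.

Lemma sinh_le_xcosh x : 0 <= x -> sinh x <= x * cosh x.
Proof.
  intros [Hx|Hx]; [|subst; rewrite sinh_0; lra].
  destruct (MVT_cor2 (fun y => y * cosh y - sinh y) (fun y => y * sinh y) 0 x Hx) as [c [Hc1 Hc2]].
  - intros c _.
    replace (c * sinh c) with ((1 * cosh c + c * sinh c) - cosh c) by ring.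
    apply (derivable_pt_lim_minus (fun y => y * cosh y) sinh); [|apply derivable_pt_lim_sinh].
    apply (derivable_pt_lim_mult id cosh); [apply derivable_pt_lim_id|apply derivable_pt_lim_cosh].
  - rewrite sinh_0 in Hc1. pose proof (sinh_pos c (proj1 Hc2)).
    assert (0 <= c * sinh c * (x - 0)) by (apply Rmult_le_pos; [apply Rmult_le_pos|]; lra).
    lra.
Qed.

Lemma cosh_le_exp x : 0 <= x -> cosh x <= exp (x * x / 2).
Proof.
  intros [Hx|Hx]; [|subst; rewrite cosh_0; replace (0*0/2) with 0 by lra; rewrite exp_0; lra].
  destruct (MVT_cor2 (fun y => cosh y * exp (- (y * y / 2)))
     (fun y => exp (- (y * y / 2)) * (sinh y - y * cosh y)) 0 x Hx) as [c [Hc1 Hc2]].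
  - intros c _.
    replace (exp (- (c * c / 2)) * (sinh c - c * cosh c)) with
      (sinh c * exp (- (c * c / 2)) + cosh c * (exp (- (c * c / 2)) * (- ((1 * c + c * 1) / 2)))) by field.
    apply (derivable_pt_lim_mult cosh (fun y => exp (- (y * y / 2)))); [apply derivable_pt_lim_cosh|].
    apply (derivable_pt_lim_comp (fun y => - (y * y / 2)) exp).
    + apply (derivable_pt_lim_opp (fun y => y * y / 2)).
      apply (derivable_pt_lim_div_scal (fun y => y * y)).
      apply (derivable_pt_lim_mult id id); apply derivable_pt_lim_id.
    + apply derivable_pt_lim_exp.
  - pose proof (sinh_le_xcosh c (Rlt_le _ _ (proj1 Hc2))).
    pose proof (exp_pos (- (c * c / 2))).
    assert (exp (- (c * c / 2)) * (sinh c - c * cosh c) * (x - 0) <= 0).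
    { assert (exp (- (c * c / 2)) * (sinh c - c * cosh c) <= 0).
      { apply Rmult_le_reg_l with (/ exp (- (c * c / 2))); [apply Rinv_0_lt_compat; lra|].
        rewrite <- Rmult_assoc, Rinv_l, Rmult_0_r by lra. lra. }
      assert (0 <= x - 0) by lra. nra. }
    rewrite cosh_0 in Hc1. replace (0 * 0 / 2) with 0 in Hc1 by lra.
    rewrite Ropp_0, exp_0 in Hc1.
    assert (Hle : cosh x * exp (- (x * x / 2)) <= 1) by lra.
    rewrite exp_Ropp in Hle. pose proof (exp_pos (x * x / 2)).
    apply Rmult_le_reg_r with (/ exp (x * x / 2)); [apply Rinv_0_lt_compat; auto|].
    rewrite Rinv_r by lra. exact Hle.
Qed.
Lemma filter_all_false {A} (g : A -> bool) l : (forall a, In a l -> g a = false) -> length (filter g l) = 0%nat.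
Proof.
  induction l as [|a l IH]; intros H; simpl; auto.
  rewrite H by (left; auto). apply IH. intros; apply H; right; auto.
Qed.

Theorem lemma3p5 (n : nat) (t : R) (hn : (1 <= n)%nat) (ht : 0 < t) :
  prob_bdry_ge n t <= 2 * exp (- (t ^ 2) / 32).
Proof.
  unfold prob_bdry_ge, sample_space.
  set (q := sqrt (INR n)).
  set (g := fun w : list letter => if Rle_dec (t * q) (INR (length (bdry_vertices (D w)))) then true else false).
  rewrite (filter_prod_length _ g) by (intros; reflexivity).
  rewrite length_prod, words_length, length_seq.
  set (c := length (filter g (words n))).
  assert (Hn : 0 < INR n) by (apply lt_0_INR; lia).
  assert (H4 : 0 < INR (4 ^ n)) by (apply lt_0_INR; apply Nat.neq_0_lt_0, Nat.pow_nonzero; lia).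
  rewrite !mult_INR.
  replace (INR c * INR n / (INR (4 ^ n) * INR n)) with (INR c / INR (4 ^ n)) by (field; lra).
  assert (Hc0 : 0 <= INR c) by apply pos_INR.
  assert (Hq2 : q * q = INR n) by (apply sqrt_sqrt; lra).
  assert (Hq0 : 0 <= q) by apply sqrt_pos.
  assert (Hq1 : 1 <= q) by (apply le_INR in hn; simpl in hn; nra).
  destruct (Rle_dec t (9/2)) as [Ht|Ht].
  -
    assert (Hc : INR c <= INR (4 ^ n)).
    { apply le_INR. unfold c. rewrite <- (words_length n). apply filter_len_le. }
    assert (Hle1 : INR c / INR (4 ^ n) <= 1).
    { apply Rmult_le_reg_r with (INR (4 ^ n)); auto. unfold Rdiv.
      rewrite Rmult_assoc, Rinv_l, Rmult_1_r, Rmult_1_l by lra. exact Hc. }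
    assert (He : exp (- (81/128)) <= exp (- t ^ 2 / 32)).
    { apply exp_mono. simpl. nra. }
    rewrite exp_Ropp in He. pose proof exp_small. pose proof (exp_pos (81/128)).
    assert (/ 2 <= / exp (81/128)) by (apply Rinv_le_contravar; lra).
    lra.
  - apply Rnot_le_lt in Ht.
    pose proof (exp_pos (- t ^ 2 / 32)).
    destruct (Rle_dec (t * q) (INR n + 2)) as [Htq|Htq].
    2:{ assert (c = 0%nat) as ->.
        { unfold c. apply filter_all_false. intros w Hw. unfold g.
          destruct (Rle_dec _ _) as [Hr|Hr]; auto. exfalso. apply Htq.
          pose proof (bdry_le_n w) as Hb. rewrite (words_in n w Hw) in Hb.
          apply le_INR in Hb. rewrite plus_INR in Hb. simpl in Hb. lra. }
        change (INR 0) with 0. unfold Rdiv. rewrite Rmult_0_l. lra. }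
    assert (Hq4 : 4 < q) by nra.
    assert (Htq8 : t <= 9 * q / 8) by nra.
    set (lam := 16 * t / (25 * q)).
    assert (Hl : 0 <= lam) by (unfold lam; apply Rmult_le_pos; [lra|]; left; apply Rinv_0_lt_compat; lra).
    pose proof (main_count lam Hl n 0 init_state 0 0 0 0 Inv_init) as HM.
    set (G := fun w => exp (lam * INR (length (bdry_vertices (build_from 0 w init_state))))) in HM.
    assert (HC : INR c * exp (lam * (t * q)) <= sumR G (words n)).
    { apply count_le_sum.
      - intros; left; apply exp_pos.
      - intros w Hw. unfold g in Hw. destruct (Rle_dec _ _) as [Hr|Hr]; [|discriminate].
        unfold G. apply exp_mono. apply Rmult_le_compat_l; auto.
      - left; apply exp_pos. }
    assert (HPhi : Phi lam (5 * lam / 4) 0 0 0 0 = 100).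
    { unfold Phi, phi. simpl INR. rewrite !Rmult_0_r, Ropp_0, exp_0. ring. }
    rewrite HPhi in HM.
    set (nu := 5 * lam / 4) in HM.
    assert (Hnu : 0 <= nu) by (unfold nu; lra).
    assert (HK : 2 * (exp nu + exp (- nu)) <= 4 * exp (nu * nu / 2)).
    { pose proof (cosh_le_exp nu Hnu). unfold cosh in H0. lra. }
    assert (HKn : (2 * (exp nu + exp (- nu))) ^ n <= INR (4 ^ n) * exp (INR n * (nu * nu / 2))).
    { rewrite pow_INR, exp_nat, <- Rpow_mult_distr. apply pow_incr. replace (INR 4) with 4 by (simpl; ring). split; [|exact HK].
      pose proof (exp_pos nu). pose proof (exp_pos (-nu)). lra. }
    assert (HB : INR c * exp (lam * (t * q)) <= INR (4 ^ n) * exp (INR n * (nu * nu / 2)) * (exp (2 * lam) * 100)).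
    { eapply Rle_trans; [exact HC|]. eapply Rle_trans; [exact HM|].
      apply Rmult_le_compat_r; [pose proof (exp_pos (2*lam)); lra| exact HKn]. }
    assert (Hexp : INR n * (nu * nu / 2) + 2 * lam - lam * (t * q) = 2 * lam - 8 * t ^ 2 / 25).
    { rewrite <- Hq2. unfold nu, lam. field. lra. }
    assert (Hfrac : INR c / INR (4 ^ n) <= 100 * exp (2 * lam - 8 * t ^ 2 / 25)).
    { rewrite <- Hexp. unfold Rminus. rewrite !exp_plus, exp_Ropp.
      pose proof (exp_pos (lam * (t * q))). pose proof (exp_pos (INR n * (nu * nu / 2))).
      pose proof (exp_pos (2 * lam)).
      apply Rmult_le_reg_r with (INR (4 ^ n) * exp (lam * (t * q))).
      { apply Rmult_lt_0_compat; auto. }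
      replace (INR c / INR (4 ^ n) * (INR (4 ^ n) * exp (lam * (t * q)))) with
        (INR c * exp (lam * (t * q))) by (field; lra).
      replace (100 * (exp (INR n * (nu * nu / 2)) * exp (2 * lam) * / exp (lam * (t * q))) *
        (INR (4 ^ n) * exp (lam * (t * q)))) with
        (INR (4 ^ n) * exp (INR n * (nu * nu / 2)) * (exp (2 * lam) * 100)) by (field; lra).
      exact HB. }
    assert (H2l : 2 * lam <= 36 / 25).
    { unfold lam. apply Rmult_le_reg_r with (25 * q); [lra|].
      replace (2 * (16 * t / (25 * q)) * (25 * q)) with (32 * t) by (field; lra). nra. }
    eapply Rle_trans; [exact Hfrac|].
    assert (Hfin : 50 * exp (36 / 25 - 8 * t ^ 2 / 25) <= exp (- t ^ 2 / 32)).
    { pose proof exp_big.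
      assert (exp (22/5) <= exp (- t ^ 2 / 32 - (36 / 25 - 8 * t ^ 2 / 25))) by (apply exp_mono; simpl; nra).
      assert (Heq : exp (- t ^ 2 / 32) = exp (- t ^ 2 / 32 - (36 / 25 - 8 * t ^ 2 / 25)) * exp (36 / 25 - 8 * t ^ 2 / 25)).
      { rewrite <- exp_plus. f_equal. ring. }
      rewrite Heq. pose proof (exp_pos (36 / 25 - 8 * t ^ 2 / 25)). nra. }
    assert (exp (2 * lam - 8 * t ^ 2 / 25) <= exp (36 / 25 - 8 * t ^ 2 / 25)) by (apply exp_mono; lra).
    lra.
Qed.
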